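(* Let $n$ be an odd perfect number such that $15 \mid n$, $5^{\alpha} \,\|\, n$ and $3^{2b} \,\|\, n$ for some positive integers $\alpha, b$. If $3 \mid (\alpha+1)(2b+1)$, then $n$ has a good prime divisor.
   Context: A positive integer $n$ is perfect if $\sigma(n)=2n$, where $\sigma$ is the sum-of-divisors function. The notation $a \,\|\, b$ means $a \mid b$ and $\gcd(a, b/a) = 1$. Let $\Phi_3(x) = x^2+x+1$. Let $\Sigma$ be the set of primes $p$ with $p \equiv 2$ or $p \equiv 4 \pmod 7$. For a prime $x > 7$, let $T(x)$ be the set of primes $q \neq 3$ with $q \mid \Phi_3(x)$. For a prime $p > 7$, define sets $S_n(p)$ recursively by $S_0(p) = \{p\}$ and $S_{n+1}(p) = S_n(p) \cup \bigcup_{x \in S_n(p)} T(x)$. A prime $p > 7$ is called good if $S_n(p) \cap \Sigma \neq \emptyset$ for some integer $n \ge 0$. *)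

(* Defs.v *)
From mathcomp Require Import all_boot.
Set Implicit Arguments. Unset Strict Implicit. Unset Printing Implicit Defensive.

Definition sigma (n : nat) : nat := \sum_(d <- divisors n) d.

Definition perfect (n : nat) : Prop := 0 < n /\ sigma n = 2 * n.

Definition unitary_div (a b : nat) : Prop := a %| b /\ coprime a (b %/ a).

Definition Phi3 (x : nat) : nat := x ^ 2 + x + 1.

Definition in_Sigma (q : nat) : Prop := prime q /\ (q %% 7 = 2 \/ q %% 7 = 4).

Definition in_T (x q : nat) : Prop := prime q /\ q <> 3 /\ q %| Phi3 x.

Fixpoint in_S (k p q : nat) : Prop :=
  match k with
  | 0 => q = p
  | k'.+1 => in_S k' p q \/ exists x, in_S k' p x /\ in_T x q
  end.

Definition good (p : nat) : Prop :=
  prime p /\ 7 < p /\ exists k q, in_S k p q /\ in_Sigma q.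

(* Main.v *)
From Stdlib Require Import NArith Lia.
Require Import Defs.
From mathcomp Require Import all_boot all_fingroup all_solvable.
From mathcomp Require Import zify.
Lemma sigmaM a b : 0 < a -> 0 < b -> coprime a b -> sigma (a * b) = sigma a * sigma b.
Proof.
move=> a0 b0 cab.
rewrite /sigma big_distrlr /=.
rewrite -[RHS](big_allpairs (F := fun p : nat * nat => p.1 * p.2)) -[RHS](big_map (fun p : nat * nat => p.1 * p.2) xpredT id).
apply: perm_big; apply: uniq_perm.
- exact: divisors_uniq.
- rewrite (map_allpairs (fun p : nat * nat => p.1 * p.2) pair).
  apply: allpairs_uniq; try exact: divisors_uniq.
  move=> [d1 d2] [e1 e2] /allpairsP[[x1 x2] /= [Hx1 Hx2 [-> ->]]] /allpairsP[[y1 y2] /= [Hy1 Hy2 [-> ->]]] /= E.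
  rewrite -!dvdn_divisors // in Hx1 Hx2 Hy1 Hy2.
  have ga : forall u v, u %| a -> v %| b -> gcdn a (u * v) = u.
    move=> u v ua vb; rewrite Gauss_gcdl ?(coprime_dvdr vb cab) //; exact/gcdn_idPr.
  have gb : forall u v, u %| a -> v %| b -> gcdn b (u * v) = v.
    move=> u v ua vb; have cbu : coprime b u by rewrite coprime_sym (coprime_dvdl ua cab).
    rewrite Gauss_gcdr ?cbu //; exact/gcdn_idPr.
  have f1 := ga _ _ Hx1 Hx2; have f2 := gb _ _ Hx1 Hx2; rewrite E (ga _ _ Hy1 Hy2) in f1; rewrite E (gb _ _ Hy1 Hy2) in f2; by rewrite -f1 -f2.
- move=> x; rewrite -dvdn_divisors ?muln_gt0 ?a0 //.
  apply/idP/idP.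
  + move=> xab.
    apply/mapP; exists (gcdn x a, gcdn x b).
      apply/allpairsP; exists (gcdn x a, gcdn x b); split => //=.
      * by rewrite -dvdn_divisors // dvdn_gcdr.
      * by rewrite -dvdn_divisors // dvdn_gcdr.
    rewrite /=; apply/eqP; rewrite eqn_dvd; apply/andP; split.
      rewrite muln_gcdl !muln_gcdr !dvdn_gcd xab !andbT.
      by rewrite (dvdn_mulr _ (dvdnn x)) (dvdn_mulr _ (dvdnn x)) (dvdn_mull _ (dvdnn x)).
    rewrite Gauss_dvd ?dvdn_gcdl //.
    exact: coprime_dvdl (dvdn_gcdr x a) (coprime_dvdr (dvdn_gcdr x b) cab).
  + move/mapP=> [[d1 d2] /allpairsP[[y1 y2] /= [Hy1 Hy2 [-> ->]]] ->] /=.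
    rewrite -!dvdn_divisors // in Hy1 Hy2.
    exact: dvdn_mul.
Qed.

Lemma sigma_pow p e : prime p -> sigma (p ^ e) = \sum_(i < e.+1) p ^ i.
Proof.
move=> pp.
rewrite /sigma -(big_mkord xpredT (fun i => p ^ i)) /index_iota subn0 -(big_map (fun i => p ^ i) xpredT id).
apply: perm_big; apply: uniq_perm.
- exact: divisors_uniq.
- rewrite map_inj_uniq ?iota_uniq //; exact: expnI (prime_gt1 pp).
- move=> d; rewrite -dvdn_divisors ?expn_gt0 ?prime_gt0 //.
  apply/idP/mapP.
  + case/dvdn_pfactor => // m me ->; exists m => //.
    by rewrite mem_iota add0n ltnS me.
  + case=> m; rewrite mem_iota => /andP[_ hm] ->; apply/dvdn_pfactor => //.
    by exists m.
Qed.

Lemma geom q m : q * (\sum_(i < m) q.+1 ^ i) + 1 = q.+1 ^ m.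
Proof.
elim: m => [|m IH]; first by rewrite big_ord0 muln0.
by rewrite big_ord_recr /= mulnDr addnAC IH expnS mulSn addnC.
Qed.

Lemma dvd31 a : 3 %| a.+1 -> 31 %| sigma (5 ^ a).
Proof.
move=> /dvdnP [k hk]; rewrite sigma_pow // hk.
have g := geom 4 (k * 3).
have h : 5 ^ (k * 3) = 1 %[mod 124] by rewrite mulnC expnM -modnXm (_ : 5 ^ 3 %% 124 = 1) // exp1n.
rewrite -g in h.
have : 124 %| 4 * \sum_(i < k * 3) 5 ^ i.
  move/eqP: h; rewrite -[1 in X in _ == X]add0n eqn_modDr mod0n => h.
  by rewrite /dvdn.
by rewrite -[124]/(4 * 31) dvdn_pmul2l.
Qed.

Lemma dvd13 b : 3 %| (2 * b).+1 -> 13 %| sigma (3 ^ (2 * b)).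
Proof.
move=> /dvdnP [k hk]; rewrite sigma_pow // hk.
have g := geom 2 (k * 3).
have h : 3 ^ (k * 3) = 1 %[mod 26] by rewrite mulnC expnM -modnXm (_ : 3 ^ 3 %% 26 = 1) // exp1n.
rewrite -g in h.
have : 26 %| 2 * \sum_(i < k * 3) 3 ^ i.
  move/eqP: h; rewrite -[1 in X in _ == X]add0n eqn_modDr mod0n => h.
  by rewrite /dvdn.
by rewrite -[26]/(2 * 13) dvdn_pmul2l.
Qed.

Lemma key n q e r : perfect n -> unitary_div (q ^ e) n -> prime q ->
  r %| sigma (q ^ e) -> coprime r 2 -> r %| n.
Proof.
move=> [n0 sn] [qn cop] pq rs r2.
have qe0 : 0 < q ^ e by rewrite expn_gt0 prime_gt0.
have nE : n = q ^ e * (n %/ q ^ e) by rewrite mulnC divnK.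
have m0 : 0 < n %/ q ^ e by rewrite divn_gt0 // dvdn_leq.
have : r %| 2 * n.
  by rewrite -sn nE sigmaM // dvdn_mulr.
by rewrite Gauss_dvdr.
Qed.

Definition test (n d : N) : bool := (n <? d * d)%num || negb (N.eqb (N.modulo n d) 0).

Fixpoint chk (n : N) (k : nat) (lo : N) : bool :=
  match k with
  | O => test n lo
  | S k => chk n k lo && chk n k (lo + 2 ^ N.of_nat k)%num
  end.

Lemma chk_spec n k lo : chk n k lo = true ->
  forall d, (lo <= d < lo + 2 ^ N.of_nat k)%num -> test n d = true.
Proof.
elim: k lo => [|k IH] lo /=.
  move=> H d Hd; have -> : d = lo by lia. exact H.
move=> /andP [H1 H2] d Hd.
have e : (2 ^ N.of_nat k.+1 = 2 * 2 ^ N.of_nat k)%num.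
  by rewrite Nat2N.inj_succ N.pow_succ_r'.
have [h|h] : (d < lo + 2 ^ N.of_nat k \/ lo + 2 ^ N.of_nat k <= d)%num by lia.
  apply: (IH lo H1); lia.
apply: (IH _ H2); lia.
Qed.

Definition checker (n : N) (K : nat) : bool :=
  (2 <=? n)%num && (n <? (2 + 2 ^ N.of_nat K) * (2 + 2 ^ N.of_nat K))%num && chk n K 2.

Lemma checker_prime n K : checker n K = true -> prime (N.to_nat n).
Proof.
move=> /andP [/andP [h2 hM] hc].
apply/negP => /negP /primePns [|[p [pp p2 pd]]].
  move/ltP => h; move: h2 => /N.leb_le; lia.
have p2' : (2 <= p)%coq_nat by apply/leP; exact: prime_gt1.
have hM' : (n < (2 + 2 ^ N.of_nat K) * (2 + 2 ^ N.of_nat K))%num by apply/N.ltb_lt.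
have hpp : (N.of_nat p * N.of_nat p <= n)%num.
  move: p2; rewrite -mulnn => p2.
  have : (Nat.mul p p <= N.to_nat n)%coq_nat by apply/leP.
  lia.
have hd : (2 <= N.of_nat p < 2 + 2 ^ N.of_nat K)%num.
  split; first lia.
  apply/N.nle_gt => hc2.
  have : ((2 + 2 ^ N.of_nat K) * (2 + 2 ^ N.of_nat K) <= N.of_nat p * N.of_nat p)%num by apply: N.mul_le_mono.
  lia.
have := chk_spec _ _ _ hc _ hd; rewrite /test.
case/dvdnP: pd => k hk.
have hk' : n = (N.of_nat k * N.of_nat p)%num.
  have : N.to_nat n = Nat.mul k p by rewrite hk.
  lia.
rewrite hk' N.Div0.mod_mul /=.
move=> /orP [/N.ltb_lt h|//]; lia.
Qed.

Lemma pow_gcd a x y p : 0 < x -> a ^ x = 1 %[mod p] -> a ^ y = 1 %[mod p] ->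
  a ^ (gcdn x y) = 1 %[mod p].
Proof.
move=> x0 hx hy.
have [k _ /dvdnP [j hj]] := Bezoutl y x0.
have h1 : (a ^ y) ^ k = 1 %[mod p] by rewrite -modnXm hy modnXm exp1n.
rewrite -[a ^ gcdn x y]muln1 -modnMmr -h1 modnMmr -expnM -expnD mulnC hj.
by rewrite [j * x]mulnC expnM -modnXm hx modnXm exp1n mulnC expnM h1.
Qed.

Lemma ord_step p a M q : prime p -> prime q -> 0 < M -> q %| M ->
  a ^ M = 1 %[mod p] -> a ^ (M %/ q) != 1 %[mod p] -> q %| p.-1.
Proof.
move=> pp pq M0 qM hM hMq.
have cap : coprime a p.
  rewrite coprime_sym prime_coprime //; apply/negP => pa.
  move: hM; rewrite -modnXm (eqP pa) exp0n // mod0n modn_small ?prime_gt1 //.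
have hF : a ^ p.-1 = 1 %[mod p].
  by rewrite -totient_prime // Euler_exp_totient.
apply/negP => nq; apply/negP: hMq; apply/negPn/eqP.
have cq : coprime q (gcdn M p.-1).
  rewrite prime_coprime //; apply/negP => h; apply: nq; exact: dvdn_trans h (dvdn_gcdr _ _).
have : gcdn M p.-1 %| M %/ q.
  have cq2 : coprime (gcdn M p.-1) q by rewrite coprime_sym.
  by rewrite -(Gauss_dvdr _ cq2) mulnC divnK // dvdn_gcdl.
case/dvdnP => k ->.
by rewrite mulnC expnM -modnXm pow_gcd // modnXm exp1n.
Qed.

Lemma prod_dvd (qs : seq nat) x : uniq qs -> all prime qs -> all (fun q => q %| x) qs ->
  \prod_(q <- qs) q %| x.
Proof.
elim: qs => [|q qs IH] /=; first by rewrite big_nil dvd1n.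
move=> /andP [nq uq] /andP [pq pqs] /andP [qx qsx].
rewrite big_cons Gauss_dvd ?qx ?IH //.
rewrite big_seq; apply big_ind => //; first by rewrite coprimen1.
  by move=> u v cu cv; rewrite coprimeMr cu cv.
move=> r rin; rewrite prime_coprime //; apply/negP.
move: pqs => /allP /(_ r rin) pr.
rewrite dvdn_prime2 // => /eqP e; move: nq; by rewrite e rin.
Qed.

Lemma pock N a (qs : seq nat) : 1 < N -> uniq qs -> all prime qs ->
  all (fun q => q %| N.-1) qs ->
  a ^ N.-1 = 1 %[mod N] ->
  (forall q, q \in qs -> exists u v, u * (a ^ (N.-1 %/ q) %% N).-1 = v * N + 1) ->
  N < (\prod_(q <- qs) q).+1 ^ 2 -> prime N.
Proof.
move=> N1 uq pqs dq hN hw hlt.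
apply/negP => /negP /primePns [|[p [pp p2 pN]]]; first by rewrite ltnNge N1.
have M0 : 0 < N.-1 by rewrite -ltnS prednK // ltnW.
have hNp : a ^ N.-1 = 1 %[mod p] by rewrite -(modn_dvdm _ pN) hN modn_dvdm.
have F : \prod_(q <- qs) q %| p.-1.
  apply: prod_dvd => //; apply/allP => q qin.
  have pq : prime q by move/allP: pqs => /(_ q qin).
  have qd : q %| N.-1 by move/allP: dq => /(_ q qin).
  apply: (ord_step _ _ _ _ pp pq M0 qd hNp); apply/negP => /eqP h.
  have [u [v huv]] := hw q qin.
  set r := a ^ (N.-1 %/ q) %% N in huv.
  have hr : r = 1 %[mod p] by rewrite /r modn_dvdm.
  have r0 : 0 < r.
    case: (posnP r) hr => [-> |//]; rewrite mod0n modn_small ?prime_gt1 //.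
  have pr : p %| r.-1.
    have : r.-1 + 1 = 0 + 1 %[mod p] by rewrite addn1 prednK.
    by move/eqP; rewrite eqn_modDr mod0n.
  have : p %| v * N + 1 by rewrite -huv dvdn_mull.
  rewrite dvdn_addr ?dvdn_mull // dvdn1 => /eqP p1.
  by move: (prime_gt1 pp); rewrite p1.
have p0 : 0 < p.-1 by rewrite -ltnS prednK ?prime_gt0 ?prime_gt1.
have := dvdn_leq p0 F; rewrite -ltnS prednK ?prime_gt0 // => h.
have : (\prod_(q <- qs) q).+1 ^ 2 <= N.
  by apply: leq_trans p2; rewrite leq_exp2r.
by rewrite leqNgt hlt.
Qed.

Lemma modn_Nat m d : m %% d = PeanoNat.Nat.modulo m d.
Proof.
case: d => [|d]; first by rewrite modn0.
apply: PeanoNat.Nat.mod_unique (_ : m = d.+1 * (m %/ d.+1) + m %% d.+1).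
  by apply/ltP; rewrite ltn_mod.
by rewrite {1}(divn_eq m d.+1) mulnC.
Qed.

Lemma tn_mod x y : N.to_nat (x mod y) = N.to_nat x %% N.to_nat y.
Proof. by rewrite modn_Nat N2Nat.inj_mod. Qed.

Lemma tn_mul x y : N.to_nat (x * y) = N.to_nat x * N.to_nat y.
Proof. exact: N2Nat.inj_mul. Qed.

Fixpoint powmodp (a m : N) (p : positive) : N :=
  match p with
  | xH => a mod m
  | xO p => let r := powmodp a m p in (r * r) mod m
  | xI p => let r := powmodp a m p in ((r * r) mod m * a) mod m
  end%num.

Definition powmod (a m e : N) : N :=
  match e with N0 => 1 mod m | Npos p => powmodp a m p end%num.

Lemma powmodp_spec a m p :
  N.to_nat (powmodp a m p) = N.to_nat a ^ Pos.to_nat p %% N.to_nat m.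
Proof.
elim: p => [p IH|p IH|] /=.
- repeat (rewrite tn_mod || rewrite tn_mul); rewrite IH Pnat.Pos2Nat.inj_xI.
  rewrite modnMml -mulnA modnMml mulnCA modnMml mulnA -expnD mulnC -expnS.
  congr (_ %% _); congr (_ ^ _); rewrite -?plusE -?multE; lia.
- repeat (rewrite tn_mod || rewrite tn_mul); rewrite IH Pnat.Pos2Nat.inj_xO.
  rewrite modnMml modnMmr -expnD.
  congr (_ %% _); congr (_ ^ _); rewrite -?plusE -?multE; lia.
- by rewrite tn_mod Pnat.Pos2Nat.inj_1 expn1.
Qed.

Lemma powmod_spec a m e :
  N.to_nat (powmod a m e) = N.to_nat a ^ N.to_nat e %% N.to_nat m.
Proof. case: e => [|p] /=; first by rewrite tn_mod. exact: powmodp_spec. Qed.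

Lemma tn_div x y : N.to_nat (x / y) = N.to_nat x %/ N.to_nat y.
Proof.
rewrite N2Nat.inj_div; case: (N.to_nat y) => [|d]; first by rewrite divn0.
apply: esym; apply: PeanoNat.Nat.div_unique (_ : N.to_nat x = d.+1 * (N.to_nat x %/ d.+1) + N.to_nat x %% d.+1).
  by apply/ltP; rewrite ltn_mod.
by rewrite {1}(divn_eq (N.to_nat x) d.+1) mulnC.
Qed.

Definition qentry := (N * nat * N * N)%type.
Definition qof (e : qentry) : N := fst (fst (fst e)).

Definition entry_ok (n a : N) (e : qentry) : bool :=
  let: (q, K, u, v) := e in
  checker q K && N.eqb ((n - 1) mod q) 0 &&
  N.eqb (u * (powmod a n ((n - 1) / q) - 1)) (v * n + 1).

Fixpoint qs_ok (n a : N) (l : list qentry) : bool :=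
  match l with
  | nil => true
  | e :: l' => entry_ok n a e && List.forallb (fun e' => negb (N.eqb (qof e') (qof e))) l' && qs_ok n a l'
  end.

Fixpoint prodq (l : list qentry) : N :=
  match l with nil => 1%num | e :: l' => (qof e * prodq l')%num end.

Definition pock_check (n a : N) (l : list qentry) : bool :=
  (1 <? n)%num && N.eqb (powmod a n (n - 1)) 1 && qs_ok n a l &&
  (n <? (prodq l + 1) * (prodq l + 1))%num.

Lemma tn_pred n : N.to_nat (n - 1) = (N.to_nat n).-1.
Proof. lia. Qed.

Lemma entry_okP n a e : 1 < N.to_nat n -> entry_ok n a e ->
  [/\ prime (N.to_nat (qof e)), N.to_nat (qof e) %| (N.to_nat n).-1 &
   exists u v, u * (N.to_nat a ^ ((N.to_nat n).-1 %/ N.to_nat (qof e)) %% N.to_nat n).-1 = v * N.to_nat n + 1].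
Proof.
case: e => [[[q K] u] v]; rewrite /qof /= => n1 /andP [/andP [hc hd] hw].
split.
- exact: checker_prime hc.
- move/N.eqb_eq: hd => hd.
  by rewrite /dvdn -tn_pred -tn_mod hd.
- exists (N.to_nat u), (N.to_nat v).
  move/N.eqb_eq: hw => hw.
  have := f_equal N.to_nat hw.
  rewrite !N2Nat.inj_add !tn_mul N2Nat.inj_sub powmod_spec tn_div tn_pred.
  set X := (_ %% _); move=> h; rewrite -subn1 -multE; simpl in h; lia.
Qed.

Lemma prodq_spec l : \prod_(q <- map (fun e => N.to_nat (qof e)) l) q = N.to_nat (prodq l).
Proof.
elim: l => [|e l IH] /=; first by rewrite big_nil.
by rewrite big_cons IH tn_mul.
Qed.

Lemma notin_map (x : N) l : List.forallb (fun e' => negb (N.eqb (qof e') x)) l ->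
  N.to_nat x \notin map (fun e => N.to_nat (qof e)) l.
Proof.
elim: l => //= e l IH /andP [h1 h2]; rewrite inE negb_or IH // andbT.
by apply/eqP => /N2Nat.inj eq; move: h1; rewrite eq N.eqb_refl.
Qed.

Lemma pock_check_prime n a l : pock_check n a l = true -> prime (N.to_nat n).
Proof.
move=> /andP [/andP [/andP [h1 hp] hq] hl].
have n1 : 1 < N.to_nat n by move/N.ltb_lt: h1; lia.
apply: (pock (N.to_nat n) (N.to_nat a) (map (fun e => N.to_nat (qof e)) l)) => //.
- elim: l hq {hl} => [|e l IH] //= /andP [/andP [_ hf] hq].
  by rewrite IH // andbT notin_map.
- elim: l hq {hl} => [|e l IH] //= /andP [/andP [he _] hq].
  by case: (entry_okP _ _ _ n1 he) => -> _ _; rewrite IH.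
- elim: l hq {hl} => [|e l IH] //= /andP [/andP [he _] hq].
  by case: (entry_okP _ _ _ n1 he) => _ -> _; rewrite IH.
- move/N.eqb_eq: hp => hp.
  have := f_equal N.to_nat hp; rewrite powmod_spec tn_pred => ->.
  by rewrite modn_small.
- elim: l hq {hl} => [|e l IH] //= /andP [/andP [he _] hq] q.
  rewrite inE => /orP [/eqP -> |]; last exact: IH.
  by case: (entry_okP _ _ _ n1 he).
- rewrite prodq_spec; move/N.ltb_lt: hl => hl.
  rewrite -mulnn; lia.
Qed.

Definition inT_check (x q : N) (K : nat) (k : N) : bool :=
  checker q K && negb (N.eqb q 3) && N.eqb (x * x + x + 1) (k * q).

Lemma inT_N x q K k : inT_check x q K k = true -> in_T (N.to_nat x) (N.to_nat q).
Proof.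
move=> /andP [/andP [hc h3] he].
split; first exact: checker_prime hc.
split; first by move=> e; move: h3; have -> : q = 3%num by lia.
move/N.eqb_eq: he => he.
have := f_equal N.to_nat he; rewrite !N2Nat.inj_add !tn_mul /Phi3 => h.
rewrite -mulnn (_ : _ + _ + _ = N.to_nat k * N.to_nat q); last by rewrite -h.
exact: dvdn_mull.
Qed.

Lemma inT_P x q k : prime (N.to_nat q) ->
  negb (N.eqb q 3) && N.eqb (x * x + x + 1) (k * q) = true -> in_T (N.to_nat x) (N.to_nat q).
Proof.
move=> hp /andP [h3 he].
split; first exact: hp.
split; first by move=> e; move: h3; have -> : q = 3%num by lia.
move/N.eqb_eq: he => he.
have := f_equal N.to_nat he; rewrite !N2Nat.inj_add !tn_mul /Phi3 => h.
rewrite -mulnn (_ : _ + _ + _ = N.to_nat k * N.to_nat q); last by rewrite -h.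
exact: dvdn_mull.
Qed.

Lemma Sigma_P q : prime (N.to_nat q) -> N.eqb (q mod 7) 2 = true -> in_Sigma (N.to_nat q).
Proof.
move=> hp hm; split; first exact: hp.
have e : N.to_nat q %% 7 = N.to_nat (q mod 7) by rewrite tn_mod.
by rewrite e; move/N.eqb_eq: hm => ->; left.
Qed.

Lemma Sigma_N q K : checker q K && (N.eqb (q mod 7) 2 || N.eqb (q mod 7) 4) = true ->
  in_Sigma (N.to_nat q).
Proof.
move=> /andP [hc hm]; split; first exact: checker_prime hc.
have e : N.to_nat q %% 7 = N.to_nat (q mod 7) by rewrite tn_mod.
rewrite e; case/orP: hm => /N.eqb_eq ->; [left|right]; reflexivity.
Qed.

Lemma in_S_step k p x q : in_S k p x -> in_T x q -> in_S k.+1 p q.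
Proof. by move=> h1 h2; right; exists x. Qed.

Lemma good31 : good 31.
Proof.
split; first by [].
split; first by [].
exists 1, 331; split.
  right; exists 31; split => //.
change (in_Sigma (N.to_nat 331)); apply: (Sigma_N _ 9); vm_compute; reflexivity.
Qed.

Lemma prime_big1 : prime (N.to_nat 3737657091169).
Proof.
apply: (pock_check_prime _ 2
  [:: (7%num, 2, 2371929286664%num, 1854969037151%num);
      (151%num, 4, 1340480728240%num, 1096241044511%num);
      (4519%num, 7, 2155825918455%num, 281848005086%num)]).
vm_compute; reflexivity.
Qed.

Lemma prime_big2 : prime (N.to_nat 987900542491).
Proof.
apply: (pock_check_prime _ 2 [:: (326039783%num, 15, 789429369667%num, 18796775046%num)]).
vm_compute; reflexivity.
Qed.

Lemma good13 : good 13.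
Proof.
split; first by [].
split; first by [].
exists 6, (N.to_nat 987900542491); split.
  apply: (in_S_step _ _ (N.to_nat 3737657091169)).
  apply: (in_S_step _ _ (N.to_nat 3348577)).
  apply: (in_S_step _ _ (N.to_nat 3169)).
  apply: (in_S_step _ _ (N.to_nat 97)).
  apply: (in_S_step _ _ (N.to_nat 61)).
  apply: (in_S_step _ _ (N.to_nat 13)) => //.
  - apply: (inT_N _ _ 4 39); vm_compute; reflexivity.
  - apply: (inT_N _ _ 6 3); vm_compute; reflexivity.
  - apply: (inT_N _ _ 11 3); vm_compute; reflexivity.
  - apply: (inT_P _ _ 3 prime_big1); vm_compute; reflexivity.
  - apply: (inT_P _ _ 14141181151641 prime_big2); vm_compute; reflexivity.
apply: (Sigma_P _ prime_big2); vm_compute; reflexivity.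
Qed.

Theorem proposition4p1 (n alpha b : nat) :
  odd n -> perfect n -> 15 %| n ->
  0 < alpha -> 0 < b ->
  unitary_div (5 ^ alpha) n -> unitary_div (3 ^ (2 * b)) n ->
  3 %| (alpha + 1) * (2 * b + 1) ->
  exists p, prime p /\ p %| n /\ good p.
Proof.
move=> _ pn _ _ _ u5 u3.
rewrite Euclid_dvdM // => /orP [h|h].
- exists 31; split; first by [].
  split; last exact: good31.
  apply: (key _ _ _ _ pn u5) => //.
  by apply: dvd31; rewrite -[alpha.+1]addn1.
- exists 13; split; first by [].
  split; last exact: good13.
  apply: (key _ _ _ _ pn u3) => //.
  by apply: dvd13; rewrite -[(2 * b).+1]addn1.
Qed.
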